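(* Let $V,W$ be Banach spaces, $T>0$, $\alpha\in(\tfrac14,\tfrac13]$, $F\in\mathcal C^4_b(V,W)$ and $(X,\mathbb A,\mathbb B)$ an $\alpha$-Hölder step-3 reduced rough path on $[0,T]$. Suppose there is a constant $C$ with $|[\mathbb X]_{s,t}|\le C|t-s|^{3\alpha}$ and $|[\mathbb{XX}]_{s,t}|\le C|t-s|^{3\alpha}$ for all $s,t\in[0,T]$. Then for every $t\in[0,T]$ the limit $$\int_0^tDF(X_r)\,dX_r:=\lim_{|\pi|\to0}\sum_{[t_i,t_{i+1}]\in\pi}\Big(DF(X_{t_i})X_{t_i,t_{i+1}}+D^2F(X_{t_i})\mathbb A_{t_i,t_{i+1}}+D^3F(X_{t_i})\mathbb B_{t_i,t_{i+1}}\Big)$$ exists in $W$ (and does not depend on the choice of partitions $\pi$ of $[0,t]$ with mesh $|\pi|\to0$).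
   Context: Tensor powers $V^{\otimes n}$ are equipped with a tensor norm (e.g. the completed projective norm) with $|a\otimes b|\le|a||b|$, so that the $i$-th Fréchet derivative $D^iF(x)$ is identified with a bounded linear map $V^{\otimes i}\to W$. $\mathcal C^k_b(V,W)$ is the set of $k$ times continuously Fréchet differentiable $F:V\to W$ with $\|D^iF\|_\infty<\infty$ for $i=0,\dots,k$. For a path $X:[0,T]\to V$ write $X_{s,t}:=X_t-X_s$. The symmetrization operator is $\mathrm{Sym}:V^{\otimes n}\to V^{\otimes n}$, $\mathrm{Sym}(T)=\frac1{n!}\sum_{\sigma\in S_n}\sigma\cdot T$ (permutation of tensor factors); $\mathrm{Sym}(V^{\otimes n})$ denotes its image (symmetric tensors). An $\alpha$-Hölder step-3 reduced rough path is a triple $(X,\mathbb A,\mathbb B)$ with $X:[0,T]\to V$, $\mathbb A:[0,T]^2\to\mathrm{Sym}(V^{\otimes2})$, $\mathbb B:[0,T]^2\to\mathrm{Sym}(V^{\otimes3})$ such that for all $s,u,t\in[0,T]$: (i) $\mathbb A_{s,t}-\mathbb A_{s,u}-\mathbb A_{u,t}=\mathrm{Sym}(X_{s,u}\otimes X_{u,t})$ and $\mathbb B_{s,t}-\mathbb B_{s,u}-\mathbb B_{u,t}=\mathrm{Sym}(X_{s,u}\otimes\mathbb A_{u,t}+\mathbb A_{s,u}\otimes X_{u,t})$; (ii) $|X_{s,t}|=O(|t-s|^{\alpha})$, $|\mathbb A_{s,t}|=O(|t-s|^{2\alpha})$, $|\mathbb B_{s,t}|=O(|t-s|^{3\alpha})$.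 The brackets are $[\mathbb X]_{s,t}:=X_{s,t}^{\otimes2}-2\mathbb A_{s,t}\in V^{\otimes 2}$ and $[\mathbb{XX}]_{s,t}:=X_{s,t}^{\otimes3}-6\mathbb B_{s,t}\in V^{\otimes 3}$. *)

(* Defs.v *)
From HB Require Import structures.
From mathcomp Require Import all_boot all_order all_algebra.
From mathcomp Require Import all_classical all_reals all_analysis.
Import Order.TTheory GRing.Theory Num.Theory.
Import numFieldNormedType.Exports.
Set Implicit Arguments.
Unset Strict Implicit.
Unset Printing Implicit Defensive.
Local Open Scope ring_scope.

Section Defs.
Variable R : realType.

Definition is_lin (U Z : normedModType R) (f : U -> Z) : Prop :=
  forall (a : R) (u v : U), f (a *: u + v) = a *: f u + f v.

Definition is_bilin (U1 U2 Z : normedModType R) (m : U1 -> U2 -> Z) : Prop :=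
  (forall a, is_lin (m a)) /\ (forall b, is_lin (fun a => m a b)).

Definition is_trilin (U Z : normedModType R) (m : U -> U -> U -> Z) : Prop :=
  (forall b c, is_lin (fun a => m a b c)) /\ (forall a c, is_lin (fun b => m a b c))
  /\ (forall a b, is_lin (m a b)).

Definition is_quadrilin (U Z : normedModType R) (m : U -> U -> U -> U -> Z) : Prop :=
  (forall b c d, is_lin (fun a => m a b c d)) /\ (forall a c d, is_lin (fun b => m a b c d))
  /\ (forall a b d, is_lin (fun c => m a b c d)) /\ (forall a b c, is_lin (m a b c)).

(** [V2] with [t2 : V -> V -> V2] is the completed projective tensor product
    V (x) V, characterised by its universal property among Banach spaces:
    [t2] is bilinear with |a (x) b| <= |a||b|, every bounded bilinear map into a
    Banach space W factors through a linear map of the same bound, and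
    continuous linear maps out of V2 are determined by their values on
    elementary tensors (density of the algebraic tensor product). *)
Definition proj_tensor2 (V V2 : normedModType R) (t2 : V -> V -> V2) : Prop :=
  [/\ is_bilin t2,
      (forall a b, `|t2 a b| <= `|a| * `|b|),
      (forall (W : completeNormedModType R) (m : V -> V -> W) (M : R),
          0 <= M -> is_bilin m -> (forall a b, `|m a b| <= M * `|a| * `|b|) ->
          exists L : V2 -> W, [/\ is_lin L, (forall p, `|L p| <= M * `|p|) &
                                 forall a b, L (t2 a b) = m a b]) &
      (forall (W : completeNormedModType R) (L L' : V2 -> W),
          is_lin L -> is_lin L' -> continuous L -> continuous L' ->
          (forall a b, L (t2 a b) = L' (t2 a b)) -> L = L')].

Definition proj_tensor3 (V V3 : normedModType R) (t3 : V -> V -> V -> V3) : Prop :=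
  [/\ is_trilin t3,
      (forall a b c, `|t3 a b c| <= `|a| * `|b| * `|c|),
      (forall (W : completeNormedModType R) (m : V -> V -> V -> W) (M : R),
          0 <= M -> is_trilin m ->
          (forall a b c, `|m a b c| <= M * `|a| * `|b| * `|c|) ->
          exists L : V3 -> W, [/\ is_lin L, (forall p, `|L p| <= M * `|p|) &
                                 forall a b c, L (t3 a b c) = m a b c]) &
      (forall (W : completeNormedModType R) (L L' : V3 -> W),
          is_lin L -> is_lin L' -> continuous L -> continuous L' ->
          (forall a b c, L (t3 a b c) = L' (t3 a b c)) -> L = L')].

(** Fréchet differentiability, in operator norm, of maps with values in
    bounded k-linear maps (given in curried form; the new direction comes first). *)
Definition frechet0 (V W : normedModType R) (F : V -> W) (D : V -> V -> W) : Prop :=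
  forall x (e : R), 0 < e -> exists d : R, 0 < d /\
    forall h, `|h| < d -> `|F (x + h) - F x - D x h| <= e * `|h|.

Definition frechet1 (V W : normedModType R) (F : V -> V -> W) (D : V -> V -> V -> W) : Prop :=
  forall x (e : R), 0 < e -> exists d : R, 0 < d /\
    forall h a, `|h| < d -> `|F (x + h) a - F x a - D x h a| <= e * `|h| * `|a|.

Definition frechet2 (V W : normedModType R) (F : V -> V -> V -> W)
    (D : V -> V -> V -> V -> W) : Prop :=
  forall x (e : R), 0 < e -> exists d : R, 0 < d /\
    forall h a b, `|h| < d ->
      `|F (x + h) a b - F x a b - D x h a b| <= e * `|h| * `|a| * `|b|.

Definition frechet3 (V W : normedModType R) (F : V -> V -> V -> V -> W)
    (D : V -> V -> V -> V -> V -> W) : Prop :=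
  forall x (e : R), 0 < e -> exists d : R, 0 < d /\
    forall h a b c, `|h| < d ->
      `|F (x + h) a b c - F x a b c - D x h a b c| <= e * `|h| * `|a| * `|b| * `|c|.

Definition opcont4 (V W : normedModType R) (D : V -> V -> V -> V -> V -> W) : Prop :=
  forall x (e : R), 0 < e -> exists d : R, 0 < d /\
    forall y a b c f, `|y - x| < d ->
      `|D y a b c f - D x a b c f| <= e * `|a| * `|b| * `|c| * `|f|.

Definition C4b_derivs (V W : normedModType R) (F : V -> W) (D1 : V -> V -> W)
    (D2 : V -> V -> V -> W) (D3 : V -> V -> V -> V -> W)
    (D4 : V -> V -> V -> V -> V -> W) : Prop :=
  [/\ [/\ (forall x, is_lin (D1 x)), (forall x, is_bilin (D2 x)),
      (forall x, is_trilin (D3 x)) & (forall x, is_quadrilin (D4 x))],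
      [/\ frechet0 F D1, frechet1 D1 D2, frechet2 D2 D3, frechet3 D3 D4 & opcont4 D4] &
      exists M : R,
        [/\ (forall x, `|F x| <= M),
            (forall x a, `|D1 x a| <= M * `|a|),
            (forall x a b, `|D2 x a b| <= M * `|a| * `|b|),
            (forall x a b c, `|D3 x a b c| <= M * `|a| * `|b| * `|c|) &
            (forall x a b c d, `|D4 x a b c d| <= M * `|a| * `|b| * `|c| * `|d|)]].

(** Partitions of [a,b]: p = [t_1; ...; t_n] with a = t_0 < t_1 < ... < t_n = b. *)
Definition is_partition (a b : R) (p : seq R) : bool :=
  path <%R a p && (last a p == b).

Definition mesh_lt (a : R) (p : seq R) (d : R) : bool :=
  all (fun st : R * R => st.2 - st.1 < d) (zip (a :: p) p).

Definition riemann_sum (W : normedModType R) (a : R) (p : seq R) (g : R -> R -> W) : W :=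
  \sum_(st <- zip (a :: p) p) g st.1 st.2.

End Defs.

(* Main.v *)
Require Import Defs.
From HB Require Import structures.
From mathcomp Require Import all_boot all_order all_algebra.
From mathcomp Require Import all_classical all_reals all_analysis.
From mathcomp Require Import ring lra.
Import Order.TTheory GRing.Theory Num.Theory.
Import numFieldNormedType.Exports.
Local Open Scope ring_scope.
Local Open Scope classical_set_scope.
Set Implicit Arguments.
Unset Strict Implicit.
Unset Printing Implicit Defensive.



Section P1.
Variable R : realType.

Section Lin.
Variables (U Z : normedModType R) (f : U -> Z) (Hf : is_lin f).
Lemma lin0 : f 0 = 0.
Proof. have H := Hf 1 0 0; rewrite !scale1r addr0 in H. apply: (addIr (f 0)); by rewrite add0r -H. Qed.
Lemma linD u v : f (u + v) = f u + f v.
Proof. by have := Hf 1 u v; rewrite !scale1r. Qed.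
Lemma linZ a u : f (a *: u) = a *: f u.
Proof. by have := Hf a u 0; rewrite !addr0 lin0 addr0. Qed.
Lemma linN u : f (- u) = - f u.
Proof. by rewrite -scaleN1r linZ scaleN1r. Qed.
Lemma linB u v : f (u - v) = f u - f v.
Proof. by rewrite linD linN. Qed.
End Lin.

Definition HasD (W : normedModType R) (f f' : R -> W) :=
  forall tau e, 0 < e -> exists d, 0 < d /\
    forall eta, `|eta| < d -> `|f (tau + eta) - f tau - eta *: f' tau| <= e * `|eta|.

Lemma mvt (W : normedModType R) (f f' : R -> W) (m : R) :
  HasD f f' -> (forall tau, 0 <= tau <= 1 -> `|f' tau| <= m) ->
  `|f 1 - f 0| <= m.
Proof.
move=> Hd Hb.
have m0 : 0 <= m by apply: le_trans (Hb 0 _); rewrite ?lexx ?ler01.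
apply/ler_addgt0Pr => eps eps0.
pose P (t : R) := forall s, 0 <= s <= t -> `|f s - f 0| <= (m + eps) * s.
pose E := [set t : R | 0 <= t <= 1 /\ P t].
have E0 : E 0.
  split; first by rewrite lexx ler01.
  move=> s /andP[s0 s1]; have -> : s = 0 by apply/eqP; rewrite eq_le s1 s0.
  by rewrite subrr normr0 mulr0.
have hs : has_sup E.
  split; first by exists 0.
  by exists 1 => t [/andP[_ ->]].
set s := sup E.
have s0 : 0 <= s by apply: sup_upper_bound.
have s1 : s <= 1 by apply: ge_sup; [exists 0|move=> t [/andP[_ ->]]].
have step : forall t, 0 <= t <= 1 -> exists d, 0 < d /\
   forall v, `|v - t| < d -> `|f v - f t| <= (m + eps) * `|v - t|.
  move=> t t01; have [d [d0 Hdd]] := Hd t eps eps0.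
  exists d; split => // v Hv.
  have := Hdd (v - t) Hv; rewrite [t + _]addrC subrK => H.
  have -> : f v - f t = (f v - f t - (v - t) *: f' t) + (v - t) *: f' t by rewrite subrK.
  apply: le_trans (ler_normD _ _) _.
  rewrite normrZ; have h1 := Hb t t01; have h2 := normr_ge0 (v - t); nra.
have s01 : 0 <= s <= 1 by rewrite s0 s1.
have Qlt : forall u, 0 <= u < s -> `|f u - f 0| <= (m + eps) * u.
  move=> u /andP[u0 us].
  have hsu : 0 < s - u by rewrite subr_gt0.
  have [t Et ht] := sup_adherent hsu hs.
  rewrite -/s in ht; have ut : u < t by lra.
  case: Et => _ Pt; apply: Pt; rewrite u0 /=; exact: ltW.
have Ps : P s.
  move=> u /andP[u0 us]; case: (ltP u s) => [ult|]; first by apply: Qlt; rewrite u0.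
  move=> su; have -> : u = s by apply/eqP; rewrite eq_le us su.
  case: (eqVneq s 0) => [->|sn0]; first by rewrite subrr normr0 mulr0.
  have spos : 0 < s by rewrite lt_neqAle eq_sym sn0 s0.
  have [d [d0 Hdd]] := step s s01.
  pose v := Num.max 0 (s - d / 2).
  have v0 : 0 <= v by rewrite le_max lexx.
  have vs : v < s by rewrite gt_max spos /= ltrBlDr ltrDl divr_gt0.
  have dv : `|v - s| < d.
    rewrite distrC ger0_norm ?subr_ge0 ?(ltW vs) //.
    rewrite ltrBlDr; apply: (@lt_le_trans _ _ (d + (s - d/2))); first lra.
    by rewrite lerD2l le_max lexx orbT.
  have e1 : `|v - s| = s - v by rewrite distrC ger0_norm // subr_ge0; exact: ltW.
  have H1 := Hdd v dv; rewrite e1 in H1.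
  have H2 := Qlt v (introT andP (conj v0 vs)).
  have -> : f s - f 0 = (f s - f v) + (f v - f 0) by rewrite addrA subrK.
  apply: le_trans (ler_normD _ _) _.
  rewrite distrC; nra.
have s_eq1 : s = 1.
  apply/eqP; rewrite eq_le s1 /=; rewrite leNgt; apply/negP => slt1.
  have [d [d0 Hdd]] := step s s01.
  pose eta := Num.min (d / 2) (1 - s).
  have eta0 : 0 < eta by rewrite lt_min divr_gt0 //= subr_gt0.
  have he1 : eta <= d/2 by rewrite ge_min lexx.
  have he2 : eta <= 1 - s by rewrite ge_min lexx orbT.
  have Es : E (s + eta).
    split; first by apply/andP; split; lra.
    move=> u /andP[u0 ue]; case: (leP u s) => [us|su]; first by apply: Ps; rewrite u0.
    have e1 : `|u - s| = u - s by rewrite ger0_norm // subr_ge0; exact: ltW.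
    have du : `|u - s| < d by rewrite e1; lra.
    have H1 := Hdd u du; rewrite e1 in H1.
    have H2 := Ps s (introT andP (conj s0 (lexx s))).
    have -> : f u - f 0 = (f u - f s) + (f s - f 0) by rewrite addrA subrK.
    apply: le_trans (ler_normD _ _) _.
    nra.
  have := sup_upper_bound hs Es; rewrite -/s; lra.
have := Ps s (introT andP (conj s0 (lexx s))); by rewrite s_eq1 mulr1.
Qed.

End P1.


Ltac zpush y := try rewrite (addrC y); repeat rewrite (addrAC _ y).
Ltac zc :=
  repeat match goal with
  | |- is_true (?y - ?y == 0) => rewrite subrr
  | |- is_true (- ?y + ?y == 0) => rewrite addNr
  | |- is_true (?S - ?y == 0) => zpush y; first [rewrite (addrK y) | rewrite (subrK y)]
  | |- is_true (?S + ?y == 0) => zpush (- y); first [rewrite (addrK y) | rewrite (subrK y) | rewrite (addrNK y) | rewrite (addNKr y) | rewrite (addrK (-y)) ]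
  end.
Ltac zm := apply/eqP; rewrite -subr_eq0 ?opprD ?opprK ?oppr0 ?subr0 ?addr0 ?add0r ?addrA; zc; rewrite ?subrr ?addNr ?eqxx //.

Section P2.
Variable R : realType.

Lemma modE1 (W : zmodType) (a b c d e f : W) :
  (a + b) - (c + d) - (e + f) = (a - c - e) + (b - d - f).
Proof. by rewrite !opprD !addrA; congr (_ + _); rewrite -!addrA; congr (_ + _); rewrite addrC -!addrA; congr (_ + _); rewrite addrC -!addrA; congr (_ + _); rewrite addrC. Qed.

Lemma modE2 (W : zmodType) (a b c d e f : W) :
  (a - b) - (c - d) - (e - f) = (a - c - e) - (b - d - f).
Proof. by rewrite modE1; congr (_ + _); rewrite !opprD !opprK. Qed.

Lemma HasD_sub (W : normedModType R) (f f' g g' : R -> W) :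
  HasD f f' -> HasD g g' -> HasD (fun t => f t - g t) (fun t => f' t - g' t).
Proof.
move=> Hf Hg tau e e0.
have e2 : 0 < e / 2 by rewrite divr_gt0.
have [d1 [d10 H1]] := Hf tau _ e2; have [d2 [d20 H2]] := Hg tau _ e2.
exists (Num.min d1 d2); split; first by rewrite lt_min d10 d20.
move=> eta; rewrite lt_min => /andP[h1 h2].
rewrite scalerBr modE2; apply: le_trans (ler_normB _ _) _.
have := H1 _ h1; have := H2 _ h2; lra.
Qed.

Lemma HasD_lin (W : normedModType R) (w : W) :
  HasD (fun t => t *: w) (fun => w).
Proof.
move=> tau e e0; exists 1; split => // eta _.
by rewrite scalerDl addrAC addrK subrr normr0 mulr_ge0 // ltW.
Qed.

Lemma HasD_sq (W : normedModType R) (w : W) :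
  HasD (fun t => (t ^+ 2 / 2) *: w) (fun t => t *: w).
Proof.
move=> tau e e0.
have w1 : 0 < `|w| + 1 by rewrite ltr_wpDl.
exists (e / (`|w| + 1)); split; first by rewrite divr_gt0.
move=> eta heta.
have -> : ((tau + eta) ^+ 2 / 2) *: w - (tau ^+ 2 / 2) *: w - eta *: (tau *: w)
   = (eta ^+ 2 / 2) *: w.
  have E : (tau + eta) ^+ 2 / 2 - tau ^+ 2 / 2 - eta * tau = eta ^+ 2 / 2 by field.
  by rewrite scalerA -E !scalerBl.
rewrite normrZ.
have h1 : `|eta| * (`|w| + 1) < e by rewrite -ltr_pdivlMr.
have h0 := normr_ge0 eta; have hw := normr_ge0 w.
rewrite ger0_norm; last by rewrite divr_ge0 // sqr_ge0.
rewrite -real_normK ?num_real //.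
have h3 : `|eta| * `|w| <= e by nra.
have h4 : e * `|eta| = e * `|eta| by [].
nra.
Qed.
End P2.


Section P3.
Variable R : realType.
Variables V W : normedModType R.

Definition Dlike (G : V -> W) (G' : V -> V -> W) (c : R) :=
  forall x e, 0 < e -> exists d, 0 < d /\
    forall h, `|h| < d -> `|G (x + h) - G x - G' x h| <= e * c * `|h|.

Lemma HasD_line (G : V -> W) (G' : V -> V -> W) c x h :
  Dlike G G' c -> 0 <= c -> (forall z, is_lin (G' z)) ->
  HasD (fun t => G (x + t *: h)) (fun t => G' (x + t *: h) h).
Proof.
move=> HG c0 Hl tau e e0.
set z := x + tau *: h.
have k0 : 0 < c * `|h| + 1 by rewrite ltr_wpDl // mulr_ge0.
have [d [d0 Hd]] := HG z (e / (c * `|h| + 1)) (divr_gt0 e0 k0).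
have h1 : 0 < `|h| + 1 by rewrite ltr_wpDl.
exists (d / (`|h| + 1)); split; first by rewrite divr_gt0.
move=> eta heta.
have Eq : x + (tau + eta) *: h = z + eta *: h by rewrite scalerDl addrA.
rewrite Eq -(linZ (Hl z)).
have hd : `|eta *: h| < d.
  rewrite normrZ; rewrite ltr_pdivlMr // in heta.
  have := normr_ge0 eta; have := normr_ge0 h; nra.
apply: le_trans (Hd _ hd) _.
rewrite normrZ.
set q := e / (c * `|h| + 1).
have hq : q * (c * `|h| + 1) = e by rewrite /q divfK // gt_eqF.
have q0 : 0 <= q by rewrite /q divr_ge0 // ltW.
have := normr_ge0 eta; have := normr_ge0 h; nra.
Qed.

Lemma lipG (G : V -> W) (G' : V -> V -> W) c m x y :
  Dlike G G' c -> 0 <= c -> (forall z, is_lin (G' z)) ->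
  (forall z h, `|G' z h| <= m * `|h|) -> `|G y - G x| <= m * `|y - x|.
Proof.
move=> HG c0 Hl Hb.
have := mvt (HasD_line x (y - x) HG c0 Hl) (m := m * `|y - x|) (fun t _ => Hb _ _).
by rewrite /= !scale1r !scale0r !addr0 [x + _]addrC subrK.
Qed.

Lemma taylor1 (G : V -> W) (G' : V -> V -> W) c L x y :
  Dlike G G' c -> 0 <= c -> (forall z, is_lin (G' z)) -> 0 <= L ->
  (forall z1 z2 a, `|G' z1 a - G' z2 a| <= L * `|z1 - z2| * `|a|) ->
  `|G y - G x - G' x (y - x)| <= L * (`|y - x| * `|y - x|).
Proof.
move=> HG c0 Hl L0 Hb.
set h := y - x.
have HD := HasD_sub (HasD_line x h HG c0 Hl) (HasD_lin (G' x h)).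
have := mvt HD (m := L * (`|h| * `|h|)).
rewrite /= !scale1r !scale0r !addr0 ?subr0 /h [x + _]addrC subrK -/h.
have -> : G y - G' x h - G x = G y - G x - G' x h by zm.
apply => t /andP[t0 t1].
apply: le_trans (Hb _ _ _) _.
rewrite [x + _]addrC addrK normrZ ger0_norm //.
have H : 0 <= L * (`|h| * `|h|) * (1 - t) by rewrite !mulr_ge0 // subr_ge0.
lra.
Qed.

Lemma taylor2 (G : V -> W) (G' : V -> V -> W) (G'' : V -> V -> V -> W) c L x y :
  Dlike G G' c -> 0 <= c -> (forall z, is_lin (G' z)) ->
  (forall b, is_lin (fun a => G'' x a b)) -> 0 <= L ->
  (forall z a, `|G' z a - G' x a - G'' x (z - x) a| <= L * (`|z - x| * `|z - x|) * `|a|) ->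
  `|G y - G x - G' x (y - x) - 2^-1 *: G'' x (y - x) (y - x)|
     <= L * (`|y - x| * `|y - x| * `|y - x|).
Proof.
move=> HG c0 Hl Hl2 L0 Hb.
set h := y - x.
have HD := HasD_sub (HasD_sub (HasD_line x h HG c0 Hl) (HasD_lin (G' x h)))
   (HasD_sq (G'' x h h)).
have := mvt HD (m := L * (`|h| * `|h| * `|h|)).
rewrite /= !scale1r !scale0r !addr0 ?subr0 /h [x + _]addrC subrK -/h expr1n expr0n /= mul0r
  scale0r subr0 div1r.
have -> : G y - G' x h - 2^-1 *: G'' x h h - G x = G y - G x - G' x h - 2^-1 *: G'' x h h by zm.
apply => t /andP[t0 t1].
have := Hb (x + t *: h) h.
rewrite [x + _]addrC addrK (linZ (Hl2 h)) => H.
apply: le_trans H _.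
rewrite normrZ ger0_norm //.
have H : 0 <= L * (`|h| * `|h| * `|h|) * (1 - t * t).
  by rewrite !mulr_ge0 // subr_ge0; nra.
lra.
Qed.

End P3.


Section P4.
Variable R : realType.

Lemma le0_by_eps (a b : R) : 0 <= b -> (forall e, 0 < e -> a <= e * b) -> a <= 0.
Proof.
move=> b0 H; apply/ler_addgt0Pr => e e0; rewrite add0r.
have b1 : 0 < b + 1 by rewrite ltr_wpDl.
apply: le_trans (H (e / (b + 1)) (divr_gt0 e0 b1)) _.
rewrite mulrAC ler_pdivrMr // ler_pM2l //; lra.
Qed.

Lemma norm_eq0_eps (W : normedModType R) (v : W) b :
  0 <= b -> (forall e, 0 < e -> `|v| <= e * b) -> v = 0.
Proof. by move=> b0 H; apply/normr0_eq0/eqP; rewrite eq_le normr_ge0 andbT; apply: le0_by_eps H. Qed.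

Variables V W : normedModType R.

Lemma Dlike_unique (G : V -> W) G1 G2 c1 c2 x h :
  Dlike G G1 c1 -> Dlike G G2 c2 -> 0 <= c1 -> 0 <= c2 ->
  is_lin (G1 x) -> is_lin (G2 x) -> G1 x h = G2 x h.
Proof.
move=> H1 H2 c10 c20 L1 L2; apply/eqP; rewrite -subr_eq0; apply/eqP.
apply: (@norm_eq0_eps _ _ ((c1 + c2) * `|h|)); first by rewrite mulr_ge0 ?addr_ge0.
move=> e e0.
have [d1 [d10 Hd1]] := H1 x e e0; have [d2 [d20 Hd2]] := H2 x e e0.
have h1 : 0 < `|h| + 1 by rewrite ltr_wpDl.
set s := Num.min d1 d2 / (`|h| + 1) / 2.
have hm : 0 < Num.min d1 d2 by rewrite lt_min d10 d20.
have s0 : 0 < s by rewrite /s !divr_gt0.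
have hs : `|s *: h| < Num.min d1 d2.
  rewrite normrZ gtr0_norm //.
  have : s * (`|h| + 1) = Num.min d1 d2 / 2 by rewrite /s mulrAC divfK // gt_eqF.
  have : s * `|h| <= s * (`|h| + 1) by apply: ler_wpM2l; [exact: ltW|rewrite lerDl].
  lra.
move: hs; rewrite lt_min => /andP[hs1 hs2].
clearbody s.
have A1 := Hd1 _ hs1; have A2 := Hd2 _ hs2.
have E : G1 x (s *: h) - G2 x (s *: h) =
   (G (x + s *: h) - G x - G2 x (s *: h)) - (G (x + s *: h) - G x - G1 x (s *: h)) by zm.
have : `|G1 x (s *: h) - G2 x (s *: h)| <= e * c1 * `|s *: h| + e * c2 * `|s *: h|.
  by rewrite E; apply: le_trans (ler_normB _ _) _; rewrite addrC; apply: lerD.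
rewrite (linZ L1) (linZ L2) -scalerBr normrZ !normrZ gtr0_norm // => H.
have : s * `|G1 x h - G2 x h| <= s * (e * ((c1 + c2) * `|h|)).
  apply: le_trans H _; rewrite le_eqVlt; apply/orP; left; apply/eqP; ring.
by rewrite ler_pM2l.
Qed.

Lemma schwarz_aux (G : V -> W) (G' : V -> V -> W) (G'' : V -> V -> V -> W) c L x h k :
  Dlike G G' c -> 0 <= c -> (forall z, is_lin (G' z)) ->
  (forall b, is_lin (fun a => G'' x a b)) -> 0 <= L ->
  (forall z a, `|G' z a - G' x a - G'' x (z - x) a| <= L * (`|z - x| * `|z - x|) * `|a|) ->
  `|(G (x + h + k) - G (x + k) - G'' x h k) - (G (x + h) - G x)|
     <= 2 * L * ((`|h| + `|k|) * (`|h| + `|k|) * (`|h| + `|k|)).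
Proof.
move=> HG c0 Hl Hl2 L0 Hb.
have HD := HasD_sub (HasD_sub (HasD_line (x + h) k HG c0 Hl) (HasD_line x k HG c0 Hl))
   (HasD_lin (G'' x h k)).
set N := `|h| + `|k|.
have := mvt HD (m := 2 * L * (N * N * N)).
rewrite /= !scale1r !scale0r !addr0 subr0.
apply => t /andP[t0 t1].
set z1 := x + h + t *: k; set z2 := x + t *: k.
have B1 := Hb z1 k; have B2 := Hb z2 k.
have Ez : (z1 - x) - (z2 - x) = h by rewrite /z1 /z2; zm.
have E : G' z1 k - G' z2 k - G'' x h k =
  (G' z1 k - G' x k - G'' x (z1 - x) k) - (G' z2 k - G' x k - G'' x (z2 - x) k)
  + (G'' x (z1 - x) k - G'' x (z2 - x) k - G'' x h k) by zm.
rewrite E.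
have -> : G'' x (z1 - x) k - G'' x (z2 - x) k - G'' x h k = 0.
  by rewrite -(linB (Hl2 k)) Ez subrr.
rewrite addr0; apply: le_trans (ler_normB _ _) _.
have n1 : `|z1 - x| <= N.
  have -> : z1 - x = h + t *: k by rewrite /z1; zm.
  apply: le_trans (ler_normD _ _) _.
  by rewrite normrZ ger0_norm // lerD2l ler_piMl.
have n2 : `|z2 - x| <= N.
  have -> : z2 - x = t *: k by rewrite /z2; zm.
  rewrite normrZ ger0_norm //.
  apply: le_trans (ler_piMl _ t1) _ => //; by rewrite lerDr.
have kN : `|k| <= N by rewrite lerDr.
have q1 : `|z1 - x| * `|z1 - x| <= N * N by rewrite ler_pM.
have q2 : `|z2 - x| * `|z2 - x| <= N * N by rewrite ler_pM.
have N0 : 0 <= N * N by rewrite mulr_ge0 // addr_ge0.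
have r1 : L * (`|z1 - x| * `|z1 - x|) * `|k| <= L * (N * N * N).
  by rewrite -mulrA; apply: ler_wpM2l => //; apply: ler_pM => //; exact: mulr_ge0.
have r2 : L * (`|z2 - x| * `|z2 - x|) * `|k| <= L * (N * N * N).
  by rewrite -mulrA; apply: ler_wpM2l => //; apply: ler_pM => //; exact: mulr_ge0.
lra.
Qed.

Lemma schwarz (G : V -> W) (G' : V -> V -> W) (G'' : V -> V -> V -> W) c L x h k :
  Dlike G G' c -> 0 <= c -> (forall z, is_lin (G' z)) ->
  (forall b, is_lin (fun a => G'' x a b)) -> (forall a, is_lin (G'' x a)) -> 0 <= L ->
  (forall z a, `|G' z a - G' x a - G'' x (z - x) a| <= L * (`|z - x| * `|z - x|) * `|a|) ->
  G'' x h k = G'' x k h.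
Proof.
move=> HG c0 Hl Hl1 Hl2 L0 Hb; apply/eqP; rewrite -subr_eq0; apply/eqP.
set N := `|h| + `|k|.
have N0 : 0 <= N by rewrite addr_ge0.
apply: (@norm_eq0_eps _ _ (4 * L * (N * N * N))); first by rewrite !mulr_ge0.
move=> s s0.
have A1 := schwarz_aux (s *: h) (s *: k) HG c0 Hl Hl1 L0 Hb.
have A2 := schwarz_aux (s *: k) (s *: h) HG c0 Hl Hl1 L0 Hb.
rewrite [x + s *: k + _]addrAC in A2.
rewrite !normrZ !gtr0_norm // in A1 A2.
set A := G (x + s *: h + s *: k) in A1 A2.
have E : G'' x (s *: h) (s *: k) - G'' x (s *: k) (s *: h) =
  ((A - G (x + s *: h) - G'' x (s *: k) (s *: h)) - (G (x + s *: k) - G x)) -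
  ((A - G (x + s *: k) - G'' x (s *: h) (s *: k)) - (G (x + s *: h) - G x)) by zm.
have : `|G'' x (s *: h) (s *: k) - G'' x (s *: k) (s *: h)| <= 4 * L * (s * N * (s * N) * (s * N)).
  rewrite E; apply: le_trans (ler_normB _ _) _.
  rewrite -!mulrDr in A1 A2; rewrite /N; lra.
rewrite (linZ (Hl1 _)) (linZ (Hl2 _)) (linZ (Hl1 _)) (linZ (Hl2 _)) !scalerA -scalerBr normrZ.
rewrite gtr0_norm ?mulr_gt0 // => H.
have H' : (s * s) * `|G'' x h k - G'' x k h| <= (s * s) * (s * (4 * L * (N * N * N))).
  apply: le_trans H _; rewrite le_eqVlt; apply/orP; left; apply/eqP; ring.
by rewrite ler_pM2l ?mulr_gt0 // in H'.
Qed.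

End P4.


Section P5.
Variable R : realType.

Lemma lin_cont (U Z : normedModType R) (L : U -> Z) M :
  is_lin L -> 0 <= M -> (forall p, `|L p| <= M * `|p|) -> continuous L.
Proof.
move=> Hl M0 Hb x; apply/cvgrPdist_lt => e e0.
have M1 : 0 < M + 1 by rewrite ltr_wpDl.
apply/nbhs_normP; exists (e / (M + 1)); first by rewrite /= divr_gt0.
move=> y /= hy.
rewrite -(linB Hl); apply: le_lt_trans (Hb _) _.
rewrite ltr_pdivlMr // in hy.
have := normr_ge0 (x - y); nra.
Qed.

Lemma ext2 (V V2 : normedModType R) (W : completeNormedModType R) (t2 : V -> V -> V2)
  (L : V2 -> W) c :
  proj_tensor2 t2 -> is_lin L -> continuous L -> 0 <= c ->
  (forall a b, `|L (t2 a b)| <= c * `|a| * `|b|) -> forall p, `|L p| <= c * `|p|.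
Proof.
move=> [[Hb1 Hb2] Hn Hu Huq] Hl Hc c0 Hab.
have Hm : is_bilin (fun a b => L (t2 a b)).
  split.
  - by move=> a k u v; rewrite /= (Hb1 a) (linD Hl) (linZ Hl).
  - by move=> b k u v; rewrite /= (Hb2 b) (linD Hl) (linZ Hl).
have [L' [Hl' Hb' He']] := Hu W _ c c0 Hm Hab.
have E : L' = L by apply: Huq => //; apply: lin_cont Hl' c0 Hb'.
by rewrite -E.
Qed.

Lemma ext3 (V V3 : normedModType R) (W : completeNormedModType R) (t3 : V -> V -> V -> V3)
  (L : V3 -> W) c :
  proj_tensor3 t3 -> is_lin L -> continuous L -> 0 <= c ->
  (forall a b d, `|L (t3 a b d)| <= c * `|a| * `|b| * `|d|) -> forall p, `|L p| <= c * `|p|.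
Proof.
move=> [[Hb1 [Hb2 Hb3]] Hn Hu Huq] Hl Hc c0 Hab.
have Hm : is_trilin (fun a b d => L (t3 a b d)).
  split; [|split].
  - by move=> b d k u v; rewrite /= (Hb1 b d) (linD Hl) (linZ Hl).
  - by move=> a d k u v; rewrite /= (Hb2 a d) (linD Hl) (linZ Hl).
  - by move=> a b k u v; rewrite /= (Hb3 a b) (linD Hl) (linZ Hl).
have [L' [Hl' Hb' He']] := Hu W _ c c0 Hm Hab.
have E : L' = L by apply: Huq => //; apply: lin_cont Hl' c0 Hb'.
by rewrite -E.
Qed.

End P5.


Section P6.
Variable R : realType.
Variables (V W : normedModType R).
Variables (F : V -> W) (D1 : V -> V -> W) (D2 : V -> V -> V -> W)
  (D3 : V -> V -> V -> V -> W) (D4 : V -> V -> V -> V -> V -> W).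
Variable M : R.
Hypothesis M0 : 0 <= M.
Hypothesis HD1l : forall x, is_lin (D1 x).
Hypothesis HD2l : forall x, is_bilin (D2 x).
Hypothesis HD3l : forall x, is_trilin (D3 x).
Hypothesis HD4l : forall x, is_quadrilin (D4 x).
Hypothesis Hf0 : frechet0 F D1.
Hypothesis Hf1 : frechet1 D1 D2.
Hypothesis Hf2 : frechet2 D2 D3.
Hypothesis Hf3 : frechet3 D3 D4.
Hypothesis HM3 : forall x a b c, `|D3 x a b c| <= M * `|a| * `|b| * `|c|.
Hypothesis HM4 : forall x a b c d, `|D4 x a b c d| <= M * `|a| * `|b| * `|c| * `|d|.

Lemma DL0 : Dlike F D1 1.
Proof.
move=> x e e0; have [d [d0 H]] := Hf0 x e0; exists d; split => // h hh.
by rewrite mulr1; apply: H.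
Qed.

Lemma DL1 b : Dlike (fun z => D1 z b) (fun z a => D2 z a b) `|b|.
Proof.
move=> x e e0; have [d [d0 H]] := Hf1 x e0; exists d; split => // h hh.
by apply: le_trans (H h b hh) _; rewrite -mulrA [`|h| * _]mulrC mulrA.
Qed.

Lemma DL2 a b : Dlike (fun z => D2 z a b) (fun z h => D3 z h a b) (`|a| * `|b|).
Proof.
move=> x e e0; have [d [d0 H]] := Hf2 x e0; exists d; split => // h hh.
apply: le_trans (H h a b hh) _; rewrite le_eqVlt; apply/orP; left; apply/eqP; ring.
Qed.

Lemma DL3 a b c : Dlike (fun z => D3 z a b c) (fun z h => D4 z h a b c) (`|a| * `|b| * `|c|).
Proof.
move=> x e e0; have [d [d0 H]] := Hf3 x e0; exists d; split => // h hh.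
apply: le_trans (H h a b c hh) _; rewrite le_eqVlt; apply/orP; left; apply/eqP; ring.
Qed.

Lemma nn3 (a b c : V) : 0 <= `|a| * `|b| * `|c|.
Proof. by rewrite !mulr_ge0. Qed.

Lemma lipD3 x y a b c : `|D3 y a b c - D3 x a b c| <= M * `|a| * `|b| * `|c| * `|y - x|.
Proof.
apply: (lipG x y (DL3 a b c) (nn3 a b c)).
- by move=> z; case: (HD4l z) => H _.
- move=> z h; apply: le_trans (HM4 z h a b c) _; rewrite le_eqVlt; apply/orP; left; apply/eqP; ring.
Qed.

Lemma tayD2 x y a b :
  `|D2 y a b - D2 x a b - D3 x (y - x) a b| <= M * `|a| * `|b| * (`|y - x| * `|y - x|).
Proof.
apply: (taylor1 x y (DL2 a b)); first by rewrite mulr_ge0.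
- by move=> z; case: (HD3l z) => H _.
- by rewrite !mulr_ge0.
- move=> z1 z2 h; apply: le_trans (lipD3 z2 z1 h a b) _.
  rewrite le_eqVlt; apply/orP; left; apply/eqP; ring.
Qed.

Lemma lipD2 x y a b : `|D2 y a b - D2 x a b| <= M * `|a| * `|b| * `|y - x|.
Proof.
apply: (lipG x y (DL2 a b)); first by rewrite mulr_ge0.
- by move=> z; case: (HD3l z) => H _.
- move=> z h; apply: le_trans (HM3 z h a b) _; rewrite le_eqVlt; apply/orP; left; apply/eqP; ring.
Qed.

Lemma tayD1 x y a :
  `|D1 y a - D1 x a - D2 x (y - x) a| <= M * `|a| * (`|y - x| * `|y - x|).
Proof.
apply: (taylor1 x y (DL1 a)) => //.
- by move=> z; case: (HD2l z) => _ H.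
- by rewrite mulr_ge0.
- move=> z1 z2 h; apply: le_trans (lipD2 z2 z1 h a) _.
  rewrite le_eqVlt; apply/orP; left; apply/eqP; ring.
Qed.

Lemma tay2D1 x y k :
  `|D1 y k - D1 x k - D2 x (y - x) k - 2^-1 *: D3 x (y - x) (y - x) k|
    <= M * `|k| * (`|y - x| * `|y - x| * `|y - x|).
Proof.
apply: (taylor2 (G'' := fun z a b => D3 z a b k) (x := x) y (DL1 k)) => //.
- by move=> z; case: (HD2l z) => _ H.
- by move=> b; case: (HD3l x) => H _; apply: H.
- by rewrite mulr_ge0.
- move=> z a; apply: le_trans (tayD2 x z a k) _.
  rewrite le_eqVlt; apply/orP; left; apply/eqP; ring.
Qed.

Lemma symD2 x a b : D2 x a b = D2 x b a.
Proof.
apply: (schwarz (G := F) (G' := D1) (x := x) a b DL0 ler01 HD1l _ _ M0).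
- by move=> b'; case: (HD2l x) => _ H.
- by move=> a'; case: (HD2l x) => H _.
- move=> z a'; apply: le_trans (tayD1 x z a') _.
  rewrite le_eqVlt; apply/orP; left; apply/eqP; ring.
Qed.

Lemma symD3a x a b c : D3 x a b c = D3 x b a c.
Proof.
have Mc : 0 <= M * `|c| by rewrite mulr_ge0.
apply: (schwarz (G := fun z => D1 z c) (G' := fun z a => D2 z a c)
  (G'' := fun z a b => D3 z a b c) (x := x) a b (DL1 c) (normr_ge0 c) _ _ _ Mc).
- by move=> z; case: (HD2l z) => _ H.
- by move=> b'; case: (HD3l x) => H _; apply: H.
- by move=> a'; case: (HD3l x) => _ [H _]; apply: H.
- move=> z a'; apply: le_trans (tayD2 x z a' c) _.
  rewrite le_eqVlt; apply/orP; left; apply/eqP; ring.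
Qed.

Lemma symD3b x a b c : D3 x a b c = D3 x a c b.
Proof.
have H1 := DL2 b c.
have H2 : Dlike (fun z => D2 z b c) (fun z h => D3 z h c b) (`|c| * `|b|).
  move=> y e e0; have [d [d0 H]] := DL2 c b y e0; exists d; split => // h hh.
  by rewrite !(symD2 _ b c); apply: H.
apply: (Dlike_unique (x := x) a H1 H2); rewrite ?mulr_ge0 //.
- by case: (HD3l x) => H _; apply: H.
- by case: (HD3l x) => H _; apply: H.
Qed.

End P6.


Section P7.
Variable R : realType.
Variables (V W V2 V3 : completeNormedModType R).
Variables (t2 : V -> V -> V2) (t3 : V -> V -> V -> V3).
Hypotheses (Ht2 : proj_tensor2 t2) (Ht3 : proj_tensor3 t3).
Variables (Sym2 : V2 -> V2) (Sym3 : V3 -> V3).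
Hypothesis HSym2 : [/\ is_lin Sym2, continuous Sym2 &
             forall a b, Sym2 (t2 a b) = 2^-1 *: (t2 a b + t2 b a)].
Hypothesis HSym3 : [/\ is_lin Sym3, continuous Sym3 &
             forall a b c, Sym3 (t3 a b c) =
               6^-1 *: (t3 a b c + t3 a c b + t3 b a c + t3 b c a + t3 c a b + t3 c b a)].
Variables (m12 : V -> V2 -> V3) (m21 : V2 -> V -> V3).
Hypothesis Hm12 : forall a, [/\ is_lin (m12 a), continuous (m12 a) &
                        forall b c, m12 a (t2 b c) = t3 a b c].
Hypothesis Hm21 : forall c, [/\ is_lin (m21^~ c), continuous (m21^~ c) &
                        forall a b, m21 (t2 a b) c = t3 a b c].
Variables (D1 : V -> V -> W) (D2 : V -> V -> V -> W) (D3 : V -> V -> V -> V -> W).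
Variables (L2 : V -> V2 -> W) (L3 : V -> V3 -> W).
Hypothesis HL2 : forall x, [/\ is_lin (L2 x), continuous (L2 x) &
                      forall a b, L2 x (t2 a b) = D2 x a b].
Hypothesis HL3 : forall x, [/\ is_lin (L3 x), continuous (L3 x) &
                      forall a b c, L3 x (t3 a b c) = D3 x a b c].
Variable M : R.
Hypothesis M0 : 0 <= M.
Hypothesis HM3 : forall x a b c, `|D3 x a b c| <= M * `|a| * `|b| * `|c|.
Hypothesis symD2 : forall x a b, D2 x a b = D2 x b a.
Hypothesis symD3a : forall x a b c, D3 x a b c = D3 x b a c.
Hypothesis symD3b : forall x a b c, D3 x a b c = D3 x a c b.
Hypothesis lipD3 : forall x y a b c,
  `|D3 y a b c - D3 x a b c| <= M * `|a| * `|b| * `|c| * `|y - x|.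
Hypothesis tayD2 : forall x y a b,
  `|D2 y a b - D2 x a b - D3 x (y - x) a b| <= M * `|a| * `|b| * (`|y - x| * `|y - x|).

Lemma contB (U Z : normedModType R) (f g : U -> Z) :
  continuous f -> continuous g -> continuous (fun p => f p - g p).
Proof. by move=> Hf Hg x; apply: cvgB; [exact: Hf|exact: Hg]. Qed.

Lemma contC (U Y Z : normedModType R) (f : U -> Y) (g : Y -> Z) :
  continuous f -> continuous g -> continuous (fun p => g (f p)).
Proof. by move=> Hf Hg x; apply: continuous_comp; [exact: Hf|exact: Hg]. Qed.

Lemma linB2 (U Z : normedModType R) (f g : U -> Z) :
  is_lin f -> is_lin g -> is_lin (fun p => f p - g p).
Proof.
move=> Hf Hg k u v; rewrite Hf Hg scalerBr; zm.
Qed.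

Lemma linC (U Y Z : normedModType R) (f : U -> Y) (g : Y -> Z) :
  is_lin f -> is_lin g -> is_lin (fun p => g (f p)).
Proof. by move=> Hf Hg k u v; rewrite Hf Hg. Qed.

Lemma L3bd x q : `|L3 x q| <= M * `|q|.
Proof.
case: (HL3 x) => Hl Hc He.
apply: (ext3 Ht3 Hl Hc M0) => a b c; rewrite He; exact: HM3.
Qed.

Lemma m21bd p c : `|m21 p c| <= `|c| * `|p|.
Proof.
case: (Hm21 c) => Hl Hc He.
apply: (ext2 Ht2 Hl Hc (normr_ge0 c)) => a b; rewrite He.
case: Ht3 => _ Hn _ _; apply: le_trans (Hn a b c) _.
rewrite le_eqVlt; apply/orP; left; apply/eqP; ring.
Qed.

Lemma L3lip x y q : `|L3 y q - L3 x q| <= M * `|y - x| * `|q|.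
Proof.
case: (HL3 x) => Hlx Hcx Hex; case: (HL3 y) => Hly Hcy Hey.
apply: (ext3 Ht3 (linB2 Hly Hlx) (contB Hcy Hcx)); first by rewrite mulr_ge0.
move=> a b c; rewrite Hex Hey; apply: le_trans (lipD3 x y a b c) _.
rewrite le_eqVlt; apply/orP; left; apply/eqP; ring.
Qed.

Lemma L2tay x y p :
  `|L2 y p - L2 x p - L3 x (m12 (y - x) p)| <= M * (`|y - x| * `|y - x|) * `|p|.
Proof.
case: (HL3 x) => Hl3 Hc3 He3; case: (HL2 x) => Hlx Hcx Hex; case: (HL2 y) => Hly Hcy Hey.
case: (Hm12 (y - x)) => Hlm Hcm Hem.
apply: (ext2 Ht2 (L := fun p => L2 y p - L2 x p - L3 x (m12 (y - x) p))
   (linB2 (linB2 Hly Hlx) (linC Hlm Hl3)) (contB (contB Hcy Hcx) (contC Hcm Hc3))).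
  by rewrite !mulr_ge0.
move=> a b; rewrite Hey Hex Hem He3; apply: le_trans (tayD2 x y a b) _.
rewrite le_eqVlt; apply/orP; left; apply/eqP; ring.
Qed.


Lemma L3sym x q : L3 x (Sym3 q) = L3 x q.
Proof.
case: (HL3 x) => Hl3 Hc3 He3; case: HSym3 => HSl HSc HSe.
case: Ht3 => _ _ _ Huq.
suff E : (fun q => L3 x (Sym3 q)) = L3 x by exact: (congr1 (fun f => f q) E).
apply: Huq => //; [exact: linC|exact: contC|].
move=> a b c; rewrite HSe (linZ Hl3) !(linD Hl3) !He3.
have eacb : D3 x a c b = D3 x a b c := esym (symD3b x a b c).
have ebac : D3 x b a c = D3 x a b c := esym (symD3a x a b c).
have ebca : D3 x b c a = D3 x a b c by rewrite (symD3b x b c a).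
have ecab : D3 x c a b = D3 x a b c by rewrite (symD3a x c a b).
have ecba : D3 x c b a = D3 x a b c by rewrite (symD3b x c b a).
rewrite eacb ebac ebca ecab ecba.
have -> : forall d : W, d + d + d + d + d + d = 6%:R *: d.
  by move=> d; rewrite scaler_nat !mulrSr mulr0n add0r.
by rewrite scalerA mulVf ?scale1r // pnatr_eq0.
Qed.

Lemma L2sym x p : L2 x (Sym2 p) = L2 x p.
Proof.
case: (HL2 x) => Hl2 Hc2 He2; case: HSym2 => HSl HSc HSe.
case: Ht2 => _ _ _ Huq.
suff E : (fun p => L2 x (Sym2 p)) = L2 x by exact: (congr1 (fun f => f p) E).
apply: Huq => //; [exact: linC|exact: contC|].
move=> a b; rewrite HSe (linZ Hl2) !(linD Hl2) !He2 (symD2 x b a).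
have -> : forall d : W, d + d = 2%:R *: d.
  by move=> d; rewrite scaler_nat !mulrSr mulr0n add0r.
by rewrite scalerA mulVf ?scale1r // pnatr_eq0.
Qed.

Variables (X : R -> V) (A : R -> R -> V2) (B : R -> R -> V3).
Variable Dd1 : V -> V -> W.
Hypothesis tay2D1 : forall x y k,
  `|Dd1 y k - Dd1 x k - D2 x (y - x) k - 2^-1 *: D3 x (y - x) (y - x) k|
    <= M * `|k| * (`|y - x| * `|y - x| * `|y - x|).
Hypothesis HDd1 : forall x, is_lin (Dd1 x).

Definition Xi u v := Dd1 (X u) (X v - X u) + L2 (X u) (A u v) + L3 (X u) (B u v).

Lemma delta_bound s u t :
  A s t - A s u - A u t = Sym2 (t2 (X u - X s) (X t - X u)) ->
  B s t - B s u - B u t = Sym3 (m12 (X u - X s) (A u t) + m21 (A s u) (X t - X u)) ->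
  `|Xi s t - Xi s u - Xi u t| <=
    M * `|X t - X u| * (`|X u - X s| * `|X u - X s| * `|X u - X s|)
    + M * (`|X u - X s| * `|X u - X s|) * `|A u t|
    + M * (`|X t - X u| * `|A s u - 2^-1 *: t2 (X u - X s) (X u - X s)|)
    + M * `|X u - X s| * `|B u t|.
Proof.
move=> HcA HcB.
set x := X s; set y := X u; set h := y - x; set k := X t - y.
case: (HL2 x) => Hl2 Hc2 He2; case: (HL3 x) => Hl3 Hc3 He3.
case: (Hm21 k) => Hml Hmc Hme.
have EA : A s t = A s u + A u t + Sym2 (t2 h k) by rewrite -HcA; zm.
have EB : B s t = B s u + B u t + Sym3 (m12 h (A u t) + m21 (A s u) k) by rewrite -HcB; zm.
have EX : X t - x = h + k by rewrite /h /k; zm.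
rewrite /Xi -/x -/y -/k EX EA EB (linD (HDd1 x)) !(linD Hl2) !(linD Hl3) L2sym He2 L3sym
  (linD Hl3).
set T1 := Dd1 y k - Dd1 x k - D2 x h k - 2^-1 *: D3 x h h k.
set T2 := L2 y (A u t) - L2 x (A u t) - L3 x (m12 h (A u t)).
set T3 := L3 x (m21 (A s u - 2^-1 *: t2 h h) k).
set T4 := L3 y (B u t) - L3 x (B u t).
have E3 : T3 = L3 x (m21 (A s u) k) - 2^-1 *: D3 x h h k.
  by rewrite /T3 (linB Hml) (linZ Hml) Hme (linB Hl3) (linZ Hl3) He3.
have E : Dd1 x h + Dd1 x k + (L2 x (A s u) + L2 x (A u t) + D2 x h k) +
   (L3 x (B s u) + L3 x (B u t) + (L3 x (m12 h (A u t)) + L3 x (m21 (A s u) k))) -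
   (Dd1 x h + L2 x (A s u) + L3 x (B s u)) - (Dd1 y k + L2 y (A u t) + L3 y (B u t))
   = - T1 - T2 + T3 - T4.
  by rewrite E3 /T1 /T2 /T4; zm.
rewrite E.
have B1 : `|T1| <= M * `|k| * (`|h| * `|h| * `|h|) by exact: tay2D1.
have B2 : `|T2| <= M * (`|h| * `|h|) * `|A u t| by exact: L2tay.
have B3 : `|T3| <= M * (`|k| * `|A s u - 2^-1 *: t2 h h|).
  apply: le_trans (L3bd _ _) _; rewrite ler_wpM2l //; exact: m21bd.
have B4 : `|T4| <= M * `|h| * `|B u t| by exact: L3lip.
apply: le_trans (ler_normB _ _) _.
apply: le_trans (lerD (ler_normD _ _) (lexx _)) _.
apply: le_trans (lerD (lerD (ler_normB _ _) (lexx _)) (lexx _)) _.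
rewrite !normrN; lra.
Qed.

End P7.


Section P8.
Variable R : realType.

Lemma rs_nil (W : normedModType R) a (g : R -> R -> W) : riemann_sum a [::] g = 0.
Proof. by rewrite /riemann_sum /= big_nil. Qed.

Lemma rs_cons (W : normedModType R) a x p (g : R -> R -> W) :
  riemann_sum a (x :: p) g = g a x + riemann_sum x p g.
Proof. by rewrite /riemann_sum /= big_cons. Qed.

Lemma rs_cat (W : normedModType R) a p1 p2 (g : R -> R -> W) :
  riemann_sum a (p1 ++ p2) g = riemann_sum a p1 g + riemann_sum (last a p1) p2 g.
Proof.
elim: p1 a => [|x p1 IH] a /=; first by rewrite rs_nil add0r.
by rewrite !rs_cons IH addrA.
Qed.

Lemma path_last (a : R) s : path <%R a s -> a <= last a s /\ (forall y, y \in s -> y <= last a s).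
Proof.
elim: s a => [|x s IH] a /=; first by split => // y; rewrite in_nil.
move=> /andP[ax /IH [h1 h2]]; split; first exact: le_trans (ltW ax) h1.
by move=> y; rewrite in_cons => /orP[/eqP->|/h2].
Qed.

Lemma path_nil (a : R) s : path <%R a s -> last a s = a -> s = [::].
Proof.
case: s => [//|x s] /= /andP[ax hp] hl.
have [h1 _] := path_last hp; move: h1; rewrite hl => h1.
have := lt_le_trans ax h1; by rewrite ltxx.
Qed.

Lemma path_gt (a : R) s : path <%R a s -> forall y, y \in s -> a < y.
Proof.
move=> hp y hy; have := order_path_min (@lt_trans _ R) hp.
by move/allP => /(_ y hy).
Qed.

Lemma last_eq (a b : R) s : path <%R a s -> b \in s -> (forall y, y \in s -> y <= b) ->
  last a s = b.
Proof.
elim: s a => [|x s IH] a //= /andP[ax hp].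
rewrite in_cons => /orP[/eqP ->|hb] hall.
  case: s IH hp hall => [//|y s] _ /= /andP[xy _] hall.
  have := hall y; rewrite !in_cons eqxx orbT => /(_ isT) yb.
  by have := lt_le_trans xy yb; rewrite ltxx.
by apply: IH => // y hy; apply: hall; rewrite in_cons hy orbT.
Qed.

Lemma split_sorted (a m : R) s : path <%R a s ->
  exists p1 p2, [/\ s = p1 ++ p2, forall y, y \in p1 -> y <= m & forall y, y \in p2 -> m < y].
Proof.
elim: s a => [|x s IH] a /=.
  by move=> _; exists [::], [::]; split => // y; rewrite in_nil.
move=> /andP[ax hp]; case: (leP x m) => hx.
  have [p1 [p2 [E h1 h2]]] := IH _ hp.
  exists (x :: p1), p2; split => //; first by rewrite E.
  by move=> y; rewrite in_cons => /orP[/eqP->|/h1].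
exists [::], (x :: s); split => // y.
rewrite in_cons => /orP[/eqP->//|hy].
exact: lt_trans hx (path_gt hp hy).
Qed.

Definition psum (th a : R) p := \sum_(st <- zip (a :: p) p) (st.2 - st.1) `^ th.

Lemma psum_nil th a : psum th a [::] = 0.
Proof. by rewrite /psum /= big_nil. Qed.

Lemma psum_cons th a x p : psum th a (x :: p) = (x - a) `^ th + psum th x p.
Proof. by rewrite /psum /= big_cons. Qed.

Lemma psum_bound (th d : R) a p : 1 <= th -> path <%R a p -> mesh_lt a p d ->
  psum th a p <= d `^ (th - 1) * (last a p - a).
Proof.
move=> th1; elim: p a => [|x p IH] a /=; first by rewrite psum_nil subrr mulr0.
move=> /andP[ax hp] /andP[hxd hm]; rewrite /= in hxd.
rewrite psum_cons.
have h1 : (x - a) `^ th <= d `^ (th - 1) * (x - a).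
  have h0 : 0 <= x - a by rewrite subr_ge0; exact: ltW.
  have th0 : 0 < th by lra.
  rewrite -(mulr_powRB1 h0 th0) mulrC; apply: ler_wpM2r => //.
  apply: ge0_ler_powR; rewrite ?nnegrE //; try lra.
have -> : d `^ (th - 1) * (last x p - a) = d `^ (th - 1) * (x - a) + d `^ (th - 1) * (last x p - x) by ring.
by apply: lerD => //; apply: IH.
Qed.

End P8.


Section P9.
Variable R : realType.
Variable W : normedModType R.
Variable Xi : R -> R -> W.
Variables T th K0 : R.
Hypothesis Hth : 1 < th.
Hypothesis HK0 : 0 <= K0.
Hypothesis Hd : forall s u t, 0 <= s -> s <= u -> u <= t -> t <= T ->
  `|Xi s t - Xi s u - Xi u t| <= K0 * (t - s) `^ th.

Definition rr := (2^-1 : R) `^ th.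
Definition K1 := 2 * K0 / (1 - 2 * rr).

Lemma rr_lt : 2 * rr < 1.
Proof.
have Hth1 := Hth; have HK01 := HK0.
have h2 : (0:R) <= 2^-1 by rewrite invr_ge0.
have th0 : 0 < th by lra.
rewrite /rr -(mulr_powRB1 h2 th0) mulrA mulfV ?pnatr_eq0 // mul1r.
have hth1 : 0 < th - 1 by lra.
have h1 : (2^-1 : R) \in Num.nneg by rewrite nnegrE invr_ge0.
have h3 : (1 : R) \in Num.nneg by rewrite nnegrE.
have h4 : (2^-1 : R) < 1 by rewrite invf_lt1; lra.
by have := gt0_ltr_powR hth1 h1 h3 h4; rewrite powR1.
Qed.

Lemma rr_ge0 : 0 <= rr.
Proof. exact: powR_ge0. Qed.

Lemma K1_eq : 2 * K1 * rr + 2 * K0 = K1.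
Proof.
have Hth1 := Hth; have HK01 := HK0.
have h : 1 - 2 * rr != 0 by have := rr_lt; rewrite subr_eq0; apply: contraTN => /eqP <-; rewrite ltxx.
have : K1 * (1 - 2 * rr) = 2 * K0 by rewrite /K1 divfK.
move=> E; rewrite -E; ring.
Qed.

Lemma K1_ge0 : 0 <= K1.
Proof. have Hth1 := Hth; have HK01 := HK0. rewrite /K1 divr_ge0 ?mulr_ge0 //; have := rr_lt; lra. Qed.

Lemma Xi0 s : 0 <= s -> s <= T -> Xi s s = 0.
Proof.
have Hth1 := Hth; have HK01 := HK0.
move=> s0 sT; have := Hd s0 (lexx s) (lexx s) sT.
rewrite (subrr s) (subrr (Xi s s)) powR0 ?mulr0; last by rewrite gt_eqF //; lra.
rewrite sub0r normrN normr_le0 => /eqP.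
by [].
Qed.

Lemma powle x y : 0 <= x -> x <= y -> x `^ th <= y `^ th.
Proof. have Hth1 := Hth. by move=> x0 xy; apply: ge0_ler_powR; rewrite ?nnegrE //; [lra|lra]. Qed.

Lemma maxineq n : forall a b p, (size p <= n)%N -> 0 <= a -> b <= T ->
  path <%R a p -> last a p = b -> `|riemann_sum a p Xi - Xi a b| <= K1 * (b - a) `^ th.
Proof.
have Hth1 := Hth; have HK01 := HK0.
have base : forall a b, 0 <= a -> b <= T -> last a [::] = b ->
    `|riemann_sum a [::] Xi - Xi a b| <= K1 * (b - a) `^ th.
  move=> a b ha hb /= hab; rewrite -hab in hb *.
  rewrite rs_nil (Xi0 ha hb) subrr normr0.
  by rewrite mulr_ge0 ?powR_ge0 ?K1_ge0.
elim: n => [|n IH] a b p hs ha hb hp hl.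
  by case: p hs hp hl => // _ _; apply: base.
case: p hs hp hl => [|x p'] hs hp hl; first by apply: base.
set p := x :: p' in hs hp hl *.
have [hab hall] := path_last hp; rewrite hl in hab hall.
have ab : a < b.
  have : x \in p by rewrite in_cons eqxx.
  move=> /hall xb; move: hp => /= /andP[ax _]; exact: lt_le_trans ax xb.
set m := (a + b) / 2.
have [p1 [p2 [Ep h1 h2]]] := split_sorted m hp.
have hu : last a p1 <= m.
  have := mem_last a p1; rewrite in_cons => /orP[/eqP->|/h1//]; rewrite /m; lra.
case: p2 Ep h2 => [|v p3] Ep h2.
  have : last a p = last a p1 by rewrite Ep cats0.
  rewrite hl => hb1; move: hu; rewrite -hb1 /m; lra.
set u := last a p1 in hu.
move: (hp) (hl) (hs); rewrite Ep cat_path last_cat /= size_cat /= => /andP[hp1 /andP[uv hp3]] hl3 hs3.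
have hv : m < v by apply: h2; rewrite in_cons eqxx.
have [au _] := path_last hp1; rewrite -/u in au.
have [vb _] := path_last hp3; rewrite hl3 in vb.
have hs4 : (size p1 + size p3 <= n)%N by move: hs3; rewrite addnS ltnS.
have s1 : (size p1 <= n)%N := leq_trans (leq_addr _ _) hs4.
have s3 : (size p3 <= n)%N := leq_trans (leq_addl _ _) hs4.
have mb : m < b by rewrite /m; lra.
have uT : u <= T by apply: le_trans hu (le_trans (ltW mb) hb).
have I1 := IH a u p1 s1 ha uT hp1 erefl.
have I3 := IH v b p3 s3 (le_trans ha (le_trans au (ltW uv))) hb hp3 hl3.
rewrite /m in hu hv mb.
have D1 := Hd ha au (le_trans (ltW uv) vb) hb.
have D2 := Hd (le_trans ha au) (ltW uv) vb hb.
rewrite rs_cat -/u rs_cons.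
set S1 := riemann_sum a p1 Xi; set S3 := riemann_sum v p3 Xi.
have E : S1 + (Xi u v + S3) - Xi a b =
   (S1 - Xi a u) + (S3 - Xi v b) - (Xi a b - Xi a u - Xi u b) - (Xi u b - Xi u v - Xi v b) by zm.
rewrite E.
set c := (b - a) `^ th.
have half : ((b - a) / 2) `^ th = c * rr by rewrite /c /rr powRM //; lra.
have pu : (u - a) `^ th <= c * rr by rewrite -half; apply: powle; lra.
have pv : (b - v) `^ th <= c * rr by rewrite -half; apply: powle; lra.
have pb : (b - u) `^ th <= c by apply: powle; lra.
have K10 := K1_ge0.
have q1 : K1 * (u - a) `^ th <= K1 * (c * rr) by apply: ler_wpM2l.
have q3 : K1 * (b - v) `^ th <= K1 * (c * rr) by apply: ler_wpM2l.
have q2 : K0 * (b - u) `^ th <= K0 * c by apply: ler_wpM2l.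
set P := K1 * (c * rr); set Z := K0 * c; set Y := K1 * c.
have EY : Y = 2 * P + 2 * Z by rewrite /Y /P /Z -{1}K1_eq; ring.
rewrite -/Y.
apply: le_trans (ler_normB _ _) _.
apply: le_trans (lerD (ler_normB _ _) (lexx _)) _.
apply: le_trans (lerD (lerD (ler_normD _ _) (lexx _)) (lexx _)) _.
move: I1 I3 D1 D2 q1 q2 q3 EY; rewrite /S1 /S3 /P /Z /Y /c.
set C := (b - a) `^ th; set P' := K1 * (C * rr); set Z' := K0 * C; set Y' := K1 * C.
set A1 := K1 * (u - a) `^ th; set A2 := K1 * (b - v) `^ th; set A3 := K0 * (b - u) `^ th.
lra.
Qed.


Lemma refine sig : forall a b rho, 0 <= a -> b <= T -> path <%R a sig -> last a sig = b ->
  path <%R a rho -> last a rho = b -> {subset sig <= rho} ->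
  `|riemann_sum a sig Xi - riemann_sum a rho Xi| <= K1 * psum th a sig.
Proof.
have K10 := K1_ge0.
elim: sig => [|s1 sig IH] a b rho ha hb hs hl hr hlr hsub.
  move: hl => /= hab; rewrite -hab in hlr.
  rewrite (path_nil hr hlr) rs_nil subrr normr0 psum_nil mulr0 //.
have hin : s1 \in rho by apply: hsub; rewrite in_cons eqxx.
move: hr hlr hsub; case/splitPr: hin => rho1 rho2 hr hlr hsub.
move: hr; rewrite cat_path /= => /andP[hr1 /andP[ls1 hr2]].
move: hlr; rewrite last_cat /= => hl2.
move: hs hl => /= /andP[as1 hs'] hl.
have [s1b _] := path_last hs'; rewrite hl in s1b.
have hrc : path <%R a (rcons rho1 s1) by rewrite rcons_path hr1 ls1.
have M1 := maxineq (leqnn _) ha (le_trans s1b hb) hrc (last_rcons _ _ _).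
have hsub2 : {subset sig <= rho2}.
  move=> x hx.
  have hx1 : s1 < x := path_gt hs' hx.
  have := hsub x; rewrite in_cons hx orbT => /(_ isT).
  rewrite mem_cat in_cons => /orP[hx2|/orP[/eqP hx2|//]].
  - have [_ hall] := path_last hrc; rewrite last_rcons in hall.
    have := hall x; rewrite mem_rcons in_cons hx2 orbT => /(_ isT) hxs.
    by move: (lt_le_trans hx1 hxs); rewrite ltxx.
  - by move: hx1; rewrite hx2 ltxx.
have I2 := IH s1 b rho2 (le_trans ha (ltW as1)) hb hs' hl hr2 hl2 hsub2.
rewrite -cat_rcons rs_cat last_rcons rs_cons psum_cons mulrDr.
set S1 := riemann_sum a (rcons rho1 s1) Xi.
have -> : Xi a s1 + riemann_sum s1 sig Xi - (S1 + riemann_sum s1 rho2 Xi) =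
  - (S1 - Xi a s1) + (riemann_sum s1 sig Xi - riemann_sum s1 rho2 Xi) by zm.
apply: le_trans (ler_normD _ _) _; rewrite normrN.
exact: lerD.
Qed.

Lemma common_ref (a b : R) (p q : seq R) : path <%R a p -> last a p = b -> path <%R a q -> last a q = b ->
  exists rho, [/\ path <%R a rho, last a rho = b, {subset p <= rho} & {subset q <= rho}].
Proof.
move=> hp hl hq hlq.
case: (eqVneq b a) => [eab|nab].
  rewrite eab in hl hlq.
  rewrite (path_nil hp hl) (path_nil hq hlq).
  by exists [::]; split => //; rewrite eab.
set rho := sort (<=%R : rel R) (undup (p ++ q)).
have memr : forall x, (x \in rho) = (x \in p) || (x \in q).
  by move=> x; rewrite mem_sort mem_undup mem_cat.
have hall : forall x, x \in rho -> a < x.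
  move=> x; rewrite memr => /orP[hx|hx]; [have := path_gt hp|have := path_gt hq]; apply; exact hx.
exists rho; split.
- rewrite path_min_sorted; first by rewrite sort_lt_sorted undup_uniq.
  by apply/allP => x /hall.
- apply: last_eq.
  + rewrite path_min_sorted; first by rewrite sort_lt_sorted undup_uniq.
    by apply/allP => x /hall.
  + rewrite memr; apply/orP; left.
    have := mem_last a p; rewrite hl in_cons => /orP[/eqP E|//].
    by rewrite E eqxx in nab.
  + move=> y; rewrite memr => /orP[hy|hy].
    * by have [_ h] := path_last hp; rewrite -hl; apply: h.
    * by have [_ h] := path_last hq; rewrite -hlq; apply: h.
- by move=> x hx; rewrite memr hx.
- by move=> x hx; rewrite memr hx orbT.
Qed.

Lemma two_part a b p q d : 0 <= a -> b <= T ->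
  path <%R a p -> last a p = b -> mesh_lt a p d ->
  path <%R a q -> last a q = b -> mesh_lt a q d ->
  `|riemann_sum a p Xi - riemann_sum a q Xi| <= 2 * (K1 * (d `^ (th - 1) * (b - a))).
Proof.
move=> ha hb hp hl hm hq hlq hmq.
have Hth1 := Hth; have K10 := K1_ge0.
have [rho [hr hlr sp sq]] := common_ref hp hl hq hlq.
have R1 := refine ha hb hp hl hr hlr sp.
have R2 := refine ha hb hq hlq hr hlr sq.
have P1 := psum_bound (ltW Hth) hp hm; rewrite hl in P1.
have P2 := psum_bound (ltW Hth) hq hmq; rewrite hlq in P2.
have Q1 : K1 * psum th a p <= K1 * (d `^ (th - 1) * (b - a)) by apply: ler_wpM2l.
have Q2 : K1 * psum th a q <= K1 * (d `^ (th - 1) * (b - a)) by apply: ler_wpM2l.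
have -> : riemann_sum a p Xi - riemann_sum a q Xi =
  (riemann_sum a p Xi - riemann_sum a rho Xi) - (riemann_sum a q Xi - riemann_sum a rho Xi) by zm.
apply: le_trans (ler_normB _ _) _.
move: R1 R2 Q1 Q2; set Z := K1 * (d `^ (th - 1) * (b - a)).
set A1 := K1 * psum th a p; set A2 := K1 * psum th a q; lra.
Qed.

End P9.


Section P10.
Variable R : realType.

Fixpoint unif (n : nat) (a hh : R) : seq R :=
  if n is n'.+1 then (a + hh) :: unif n' (a + hh) hh else [::].

Lemma unif_path n a hh : 0 < hh -> path <%R a (unif n a hh).
Proof.
move=> h0; elim: n a => [|n IH] a //=; rewrite IH andbT; rewrite ltrDl //.
Qed.

Lemma unif_last n a hh : last a (unif n a hh) = a + n%:R * hh.
Proof.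
elim: n a => [|n IH] a /=; first by rewrite mul0r addr0.
by rewrite IH -[n.+1]addn1 natrD; ring.
Qed.

Lemma unif_mesh n a hh d : hh < d -> mesh_lt a (unif n a hh) d.
Proof.
move=> hd; elim: n a => [|n IH] a //=.
rewrite /mesh_lt /= addrAC subrr add0r hd /=; exact: IH.
Qed.

Lemma mesh_mono (a : R) p d d' : d <= d' -> mesh_lt a p d -> mesh_lt a p d'.
Proof.
move=> dd /allP H; apply/allP => st hst; have := H st hst; move=> /= h.
exact: lt_le_trans h dd.
Qed.

Definition Nn (x : R) := (Num.truncn x).+1.
Definition upart (t d : R) := unif (Nn (t / d)) 0 (t / (Nn (t / d))%:R).

Lemma upart_ok t d : 0 < t -> 0 < d ->
  [/\ path <%R 0 (upart t d), last 0 (upart t d) = t & mesh_lt 0 (upart t d) d].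
Proof.
move=> t0 d0.
have N0 : (0 : R) < (Nn (t / d))%:R by rewrite ltr0n.
have hh0 : 0 < t / (Nn (t / d))%:R by rewrite divr_gt0.
split.
- exact: unif_path.
- by rewrite /upart unif_last add0r mulrC divfK // gt_eqF.
- apply: unif_mesh; rewrite ltr_pdivrMr //.
  have h : t / d < (Nn (t / d))%:R := truncnS_gt (t / d).
  by rewrite ltr_pdivrMr // in h; rewrite mulrC.
Qed.

Variable W : completeNormedModType R.
Variable Xi : R -> R -> W.
Variables T th K0 : R.
Hypothesis Hth : 1 < th.
Hypothesis HK0 : 0 <= K0.
Hypothesis Hd : forall s u t, 0 <= s -> s <= u -> u <= t -> t <= T ->
  `|Xi s t - Xi s u - Xi u t| <= K0 * (t - s) `^ th.

Lemma small_d t e : 0 < t -> 0 < e -> exists d, 0 < d /\ 2 * (K1 th K0 * (d `^ (th - 1) * t)) < e.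
Proof.
move=> t0 e0; have K10 := K1_ge0 Hth HK0; have Hth1 := Hth.
set K := K1 th K0 in K10 *.
have k1 : 0 <= 2 * K * t by apply: mulr_ge0; [apply: mulr_ge0|apply: ltW].
have k0 : 0 < 2 * K * t + 1 by lra.
set c := e / (2 * K * t + 1).
have c0 : 0 < c by rewrite divr_gt0.
exists (c `^ (th - 1)^-1); split; first by rewrite powR_gt0.
rewrite -powRrM mulVf ?powRr1 ?ltW //; last by rewrite gt_eqF // subr_gt0.
have : c * (2 * K * t + 1) = e by rewrite /c divfK // gt_eqF.
move=> E; rewrite -E; nra.
Qed.

Lemma sewing t : 0 <= t <= T ->
  exists I : W, forall e : R, 0 < e -> exists d : R, 0 < d /\
    forall p : seq R, is_partition 0 t p -> mesh_lt 0 p d ->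
      `|riemann_sum 0 p Xi - I| < e.
Proof.
move=> /andP[t0 tT].
case: (eqVneq t 0) => [->|tn0].
  exists 0 => e e0; exists 1; split => // p /andP[hp /eqP hl] _.
  by rewrite (path_nil hp hl) rs_nil subrr normr0.
have tp : 0 < t by rewrite lt_neqAle eq_sym tn0 t0.
have K10 := K1_ge0 Hth HK0; set K := K1 th K0 in K10.
pose dn (n : nat) : R := (n.+1%:R)^-1.
have dn0 : forall n, 0 < dn n by move=> n; rewrite invr_gt0 ltr0n.
have dnmono : forall n m, (n <= m)%N -> dn m <= dn n.
  by move=> n m nm; rewrite lef_pV2 ?posrE ?ltr0n // ler_nat ltnS.
have dnsmall : forall d, 0 < d -> exists n, dn n < d.
  move=> d d0; exists (Num.truncn (d^-1)).
  rewrite /dn invf_plt ?posrE ?ltr0n //; exact: truncnS_gt.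
pose u (n : nat) := riemann_sum 0 (upart t (dn n)) Xi.
have TP : forall d p q, is_partition 0 t p -> mesh_lt 0 p d -> is_partition 0 t q ->
    mesh_lt 0 q d -> `|riemann_sum 0 p Xi - riemann_sum 0 q Xi| <= 2 * (K * (d `^ (th - 1) * t)).
  move=> d p q /andP[hp /eqP hl] hm /andP[hq /eqP hlq] hmq.
  have := two_part Hth HK0 Hd (lexx 0) tT hp hl hm hq hlq hmq.
  by rewrite subr0.
have UP : forall n, is_partition 0 t (upart t (dn n)) /\ mesh_lt 0 (upart t (dn n)) (dn n).
  by move=> n; have [h1 h2 h3] := upart_ok tp (dn0 n); rewrite /is_partition h1 h2 eqxx.
have cauchy : forall e, 0 < e -> exists N, forall n m, (N <= n)%N -> (N <= m)%N -> `|u n - u m| < e.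
  move=> e e0; have [d [d0 hd]] := small_d tp e0; have [N hN] := dnsmall d d0.
  exists N => n m hn hm; apply: le_lt_trans hd.
  have [pn mn] := UP n; have [pm mm] := UP m.
  apply: TP => //.
  - by apply: (mesh_mono _ mn); exact: le_trans (dnmono _ _ hn) (ltW hN).
  - by apply: (mesh_mono _ mm); exact: le_trans (dnmono _ _ hm) (ltW hN).
have cu : cvg (u @ \oo).
  apply/cauchy_cvgP/cauchyP => e e0.
  have [N HN] := cauchy e e0.
  exists (u N); exists N => // m /= hm.
  rewrite -ball_normE /=. exact: HN.
exists (lim (u @ \oo)) => e e0.
have e2 : 0 < e / 2 by rewrite divr_gt0.
have [N1 _ HN1] := (proj1 (cvgrPdist_lt _ _) cu) _ e2.
have [d [d0 hd]] := small_d tp e2.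
have [N2 hN2] := dnsmall d d0.
exists d; split => // p hp hmp.
set n := maxn N1 N2.
have [pn mn] := UP n.
have h1 : `|riemann_sum 0 p Xi - u n| < e / 2.
  apply: le_lt_trans hd; apply: TP => //.
  apply: mesh_mono _ mn; apply: le_trans (dnmono _ _ (leq_maxr N1 N2)) (ltW hN2).
have h2 : `|lim (u @ \oo) - u n| < e / 2 by apply: HN1; rewrite /= leq_maxl.
have -> : riemann_sum 0 p Xi - lim (u @ \oo) = (riemann_sum 0 p Xi - u n) - (lim (u @ \oo) - u n) by zm.
apply: le_lt_trans (ler_normB _ _) _; lra.
Qed.

End P10.


Section P11.
Variable R : realType.

Lemma powbound (Kh z y e : R) : 0 <= e -> `|z| <= y -> Kh * `|z| `^ e <= `|Kh| * y `^ e.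
Proof.
move=> e0 zy; apply: le_trans (_ : `|Kh| * `|z| `^ e <= _).
  by apply: ler_wpM2r; [exact: powR_ge0|exact: ler_norm].
apply: ler_wpM2l => //; apply: ge0_ler_powR; rewrite ?nnegrE //.
exact: le_trans (normr_ge0 _) zy.
Qed.

Lemma powk (x e : R) (n : nat) : 0 <= x -> x `^ (n%:R * e) = (x `^ e) ^+ n.
Proof. by move=> x0; rewrite mulrC powRrM powR_mulrn // powR_ge0. Qed.

End P11.

Ltac mono := repeat first [ apply: ler_pM | apply: mulr_ge0 | apply: normr_ge0 | assumption | exact: lexx ].

Local Close Scope classical_set_scope.
Unset Implicit Arguments.
Set Strict Implicit.

Theorem theorem3p2
  (R : realType) (V W V2 V3 : completeNormedModType R)
  (t2 : V -> V -> V2) (t3 : V -> V -> V -> V3)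
  (Ht2 : proj_tensor2 t2) (Ht3 : proj_tensor3 t3)
  (* symmetrisation operators on V(x)V and V(x)V(x)V *)
  (Sym2 : V2 -> V2) (Sym3 : V3 -> V3)
  (HSym2 : [/\ is_lin Sym2, continuous Sym2 &
             forall a b, Sym2 (t2 a b) = 2^-1 *: (t2 a b + t2 b a)])
  (HSym3 : [/\ is_lin Sym3, continuous Sym3 &
             forall a b c, Sym3 (t3 a b c) =
               6^-1 *: (t3 a b c + t3 a c b + t3 b a c + t3 b c a + t3 c a b + t3 c b a)])
  (* the products V x (V(x)V) -> V(x)V(x)V and (V(x)V) x V -> V(x)V(x)V *)
  (m12 : V -> V2 -> V3) (m21 : V2 -> V -> V3)
  (Hm12 : forall a, [/\ is_lin (m12 a), continuous (m12 a) &
                        forall b c, m12 a (t2 b c) = t3 a b c])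
  (Hm21 : forall c, [/\ is_lin (m21^~ c), continuous (m21^~ c) &
                        forall a b, m21 (t2 a b) c = t3 a b c])
  (T alpha : R) (HT : 0 < T) (Halpha : 4^-1 < alpha <= 3^-1)
  (* F in C^4_b(V,W) with derivatives D1..D4 *)
  (F : V -> W) (D1 : V -> V -> W) (D2 : V -> V -> V -> W)
  (D3 : V -> V -> V -> V -> W) (D4 : V -> V -> V -> V -> V -> W)
  (HF : C4b_derivs F D1 D2 D3 D4)
  (* D^2F(x), D^3F(x) viewed as bounded linear maps on V(x)V, V(x)V(x)V *)
  (L2 : V -> V2 -> W) (L3 : V -> V3 -> W)
  (HL2 : forall x, [/\ is_lin (L2 x), continuous (L2 x) &
                      forall a b, L2 x (t2 a b) = D2 x a b])
  (HL3 : forall x, [/\ is_lin (L3 x), continuous (L3 x) &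
                      forall a b c, L3 x (t3 a b c) = D3 x a b c])
  (* the alpha-Hoelder step-3 reduced rough path (X, A, B) on [0,T] *)
  (X : R -> V) (A : R -> R -> V2) (B : R -> R -> V3)
  (HAsym : forall s t, 0 <= s <= T -> 0 <= t <= T -> Sym2 (A s t) = A s t)
  (HBsym : forall s t, 0 <= s <= T -> 0 <= t <= T -> Sym3 (B s t) = B s t)
  (HchenA : forall s u t, 0 <= s <= T -> 0 <= u <= T -> 0 <= t <= T ->
     A s t - A s u - A u t = Sym2 (t2 (X u - X s) (X t - X u)))
  (HchenB : forall s u t, 0 <= s <= T -> 0 <= u <= T -> 0 <= t <= T ->
     B s t - B s u - B u t = Sym3 (m12 (X u - X s) (A u t) + m21 (A s u) (X t - X u)))
  (Hhold : exists K : R, forall s t, 0 <= s <= T -> 0 <= t <= T ->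
     [/\ `|X t - X s| <= K * `|t - s| `^ alpha,
         `|A s t| <= K * `|t - s| `^ (2 * alpha) &
         `|B s t| <= K * `|t - s| `^ (3 * alpha)])
  (* bracket bounds *)
  (C : R)
  (Hbr1 : forall s t, 0 <= s <= T -> 0 <= t <= T ->
     `|t2 (X t - X s) (X t - X s) - 2 *: A s t| <= C * `|t - s| `^ (3 * alpha))
  (Hbr2 : forall s t, 0 <= s <= T -> 0 <= t <= T ->
     `|t3 (X t - X s) (X t - X s) (X t - X s) - 6 *: B s t|
        <= C * `|t - s| `^ (3 * alpha)) :
  forall t, 0 <= t <= T ->
  exists I : W, forall e : R, 0 < e -> exists d : R, 0 < d /\
    forall p : seq R, is_partition 0 t p -> mesh_lt 0 p d ->
      `|riemann_sum 0 p (fun u v =>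
          D1 (X u) (X v - X u) + L2 (X u) (A u v) + L3 (X u) (B u v)) - I| < e.
Proof.
move=> t ht.
case: HF => [[HD1l HD2l HD3l HD4l] [Hf0 Hf1 Hf2 Hf3 Hop] [M [HM0 HM1 HM2 HM3 HM4]]].
have M0 : 0 <= M := le_trans (normr_ge0 _) (HM0 0).
have S2 := symD2 M0 HD1l HD2l HD3l Hf0 Hf1 Hf2 HM3.
have S3a := symD3a M0 HD2l HD3l HD4l Hf1 Hf2 Hf3 HM4.
have S3b := symD3b M0 HD1l HD2l HD3l Hf0 Hf1 Hf2 HM3.
have LD3 := lipD3 HD4l Hf3 HM4.
have TD2 := tayD2 M0 HD3l HD4l Hf2 Hf3 HM4.
have T2D1 := tay2D1 M0 HD2l HD3l HD4l Hf1 Hf2 Hf3 HM4.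
have DB := delta_bound Ht2 Ht3 HSym2 HSym3 Hm12 Hm21 HL2 HL3 M0 HM3 S2 S3a S3b LD3 TD2
   (X := X) (A := A) (B := B) T2D1 HD1l.
have [Kh HK] := Hhold.
set K := `|Kh|; set Cc := `|C|.
have K0' : 0 <= K by exact: normr_ge0.
have Cc0 : 0 <= Cc by exact: normr_ge0.
have al0 : 0 <= alpha by case/andP: Halpha => h _; lra.
have Hth : 1 < 4 * alpha by case/andP: Halpha => h _; lra.
set K0 := M * (K ^+ 4 + K ^+ 3 + Cc * K + K ^+ 2).
have HK0 : 0 <= K0 by rewrite /K0 mulr_ge0 // !addr_ge0 ?exprn_ge0 ?mulr_ge0.
have Hd : forall s u r, 0 <= s -> s <= u -> u <= r -> r <= T ->
    `|Xi L2 L3 X A B D1 s r - Xi L2 L3 X A B D1 s u - Xi L2 L3 X A B D1 u r|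
      <= K0 * (r - s) `^ (4 * alpha).
  move=> s u r hs hsu hur hrT.
  have uT : u <= T := le_trans hur hrT.
  have sT : s <= T := le_trans hsu uT.
  have u0 : 0 <= u := le_trans hs hsu.
  have r0 : 0 <= r := le_trans u0 hur.
  have sR : 0 <= s <= T by rewrite hs sT.
  have uR : 0 <= u <= T by rewrite u0 uT.
  have rR : 0 <= r <= T by rewrite r0 hrT.
  apply: le_trans (DB s u r (HchenA s u r sR uR rR) (HchenB s u r sR uR rR)) _.
  have rs0 : 0 <= r - s by rewrite subr_ge0 (le_trans hsu hur).
  have nus : `|u - s| <= r - s by rewrite ger0_norm ?subr_ge0 //; lra.
  have nru : `|r - u| <= r - s by rewrite ger0_norm ?subr_ge0 //; lra.
  set P := (r - s) `^ alpha.
  have P0 : 0 <= P by exact: powR_ge0.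
  have [hx1 _ _] := HK s u sR uR.
  have [hx2 ha2 hb2] := HK u r uR rR.
  have hbr := Hbr1 s u sR uR.
  have bh : `|X u - X s| <= K * P := le_trans hx1 (powbound Kh al0 nus).
  have bk : `|X r - X u| <= K * P := le_trans hx2 (powbound Kh al0 nru).
  have ba : `|A u r| <= K * P ^+ 2.
    apply: le_trans ha2 _; rewrite /P -powk //.
    by apply: powbound; rewrite // mulr_ge0.
  have bb : `|B u r| <= K * P ^+ 3.
    apply: le_trans hb2 _; rewrite /P -powk //.
    by apply: powbound; rewrite // mulr_ge0.
  have bq : `|A s u - 2^-1 *: t2 (X u - X s) (X u - X s)| <= 2^-1 * (Cc * P ^+ 3).
    have -> : A s u - 2^-1 *: t2 (X u - X s) (X u - X s) =
        (- 2^-1) *: (t2 (X u - X s) (X u - X s) - 2 *: A s u).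
      rewrite scalerBr scalerA mulNr mulVf ?pnatr_eq0 // scaleN1r opprK scaleNr; zm.
    rewrite normrZ normrN ger0_norm ?invr_ge0 //.
    apply: ler_wpM2l; first by rewrite invr_ge0.
    apply: le_trans hbr _; rewrite /P -powk //.
    by apply: powbound; rewrite // mulr_ge0.
  rewrite -/(Xi L2 L3 X A B D1 s r) (@powk R (r - s) alpha 4 rs0) -/P.
  have H2 : 2^-1 * (Cc * P ^+ 3) <= Cc * P ^+ 3.
    have : 0 <= Cc * P ^+ 3 by rewrite mulr_ge0 // exprn_ge0.
    lra.
  set h := `|X u - X s|; set k := `|X r - X u|; set a := `|A u r|; set b := `|B u r|.
  set q := `|A s u - 2^-1 *: t2 (X u - X s) (X u - X s)|.
  have bq' : q <= Cc * P ^+ 3 := le_trans bq H2.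
  have KP0 : 0 <= K * P by rewrite mulr_ge0.
  have P20 : 0 <= P ^+ 2 by rewrite exprn_ge0.
  have P30 : 0 <= P ^+ 3 by rewrite exprn_ge0.
  have KP20 : 0 <= K * P ^+ 2 by rewrite mulr_ge0.
  have KP30 : 0 <= K * P ^+ 3 by rewrite mulr_ge0.
  have CP30 : 0 <= Cc * P ^+ 3 by rewrite mulr_ge0.
  have E1 : M * k * (h * h * h) <= M * (K * P) * ((K * P) * (K * P) * (K * P)) by mono.
  have E2 : M * (h * h) * a <= M * ((K * P) * (K * P)) * (K * P ^+ 2) by mono.
  have E3 : M * (k * q) <= M * ((K * P) * (Cc * P ^+ 3)) by mono.
  have E4 : M * h * b <= M * (K * P) * (K * P ^+ 3) by mono.
  have EE : M * (K * P) * ((K * P) * (K * P) * (K * P)) + M * ((K * P) * (K * P)) * (K * P ^+ 2)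
     + M * ((K * P) * (Cc * P ^+ 3)) + M * (K * P) * (K * P ^+ 3) = K0 * P ^+ 4 by rewrite /K0; ring.
  move: E1 E2 E3 E4 EE.
  set Z1 := M * (K * P) * _; set Z2 := M * (_ * _) * (K * P ^+ 2); set Z3 := M * (_ * (Cc * _));
  set Z4 := M * (K * P) * (K * P ^+ 3); set Z := K0 * _.
  set Y1 := M * k * _; set Y2 := M * (h * h) * a; set Y3 := M * (k * q); set Y4 := M * h * b.
  lra.
have := sewing Hth HK0 Hd ht.
by [].
Qed.
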